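(* For $a,s\in\mathbb C$, $(a,s/2)\in\overline{\mathbb B}_2$ if and only if there exists $p\in\mathbb T$ such that $(a,s,p)\in\overline{\mathbb P}$.
   Context: The pentablock is $\mathbb P=\{(a_{21},\operatorname{tr}A_0,\det A_0): A_0=[a_{ij}]\in M_2(\mathbb C),\ \|A_0\|<1\}\subset\mathbb C^3$ with closure $\overline{\mathbb P}$. $\overline{\mathbb B}_2$ is the closed Euclidean unit ball in $\mathbb C^2$ and $\mathbb T$ the unit circle. *)

(* Defs.v *)
From HB Require Import structures.
From mathcomp Require Import all_boot all_order all_algebra.
From mathcomp Require Import complex.
Set Implicit Arguments. Unset Strict Implicit. Unset Printing Implicit Defensive.
Import Order.TTheory GRing.Theory Num.Theory.
Local Open Scope ring_scope.

(* The
   order on [R[i]] is the canonical partial order of a numClosedFieldType: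
   [0 < e] forces [e] real and positive; [`|z|] is the modulus (a real
   nonnegative element of R[i]). *)

Definition vnorm2 (R : rcfType) (x : 'cV[R[i]]_2) : R[i] :=
  `|x 0 0| ^+ 2 + `|x 1 0| ^+ 2.

(* Operator norm (w.r.t. the Euclidean norm on C^2) strictly less than 1:
   sup_{|x|=1} |A x| < 1, i.e. there is c < 1 with |A x| <= c |x| for all x. *)
Definition opnorm_lt1 (R : rcfType) (A : 'M[R[i]]_2) : Prop :=
  exists c : R[i], 0 <= c /\ c < 1 /\
    forall x : 'cV[R[i]]_2, vnorm2 (A *m x) <= c ^+ 2 * vnorm2 x.

(* The pentablock P: points (a_21, tr A, det A) with ||A|| < 1.
   Index 1 0 is row 2, column 1 (0-based ordinals). *)
Definition pentablock (R : rcfType) (a s p : R[i]) : Prop :=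
  exists A : 'M[R[i]]_2, opnorm_lt1 A /\
    A 1 0 = a /\ \tr A = s /\ \det A = p.

(* Topological closure of P in C^3 (product/max-norm metric). *)
Definition pentablock_closure (R : rcfType) (a s p : R[i]) : Prop :=
  forall eps : R[i], 0 < eps ->
    exists a' s' p' : R[i], pentablock a' s' p' /\
      `|a' - a| < eps /\ `|s' - s| < eps /\ `|p' - p| < eps.

Definition closed_ball2 (R : rcfType) (z w : R[i]) : Prop :=
  `|z| ^+ 2 + `|w| ^+ 2 <= 1.

Definition unit_circle (R : rcfType) (p : R[i]) : Prop := `|p| = 1.

(* Main.v *)
Require Import Defs.
From HB Require Import structures.
From mathcomp Require Import all_boot all_order all_algebra.
From mathcomp Require Import complex reals.
From mathcomp Require Import ring lra.
Import Order.TTheory GRing.Theory Num.Theory.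
Local Open Scope complex_scope.
Local Open Scope ring_scope.

Section S.
Variable R : rcfType.
Implicit Types z w : R[i].
Definition nr z : R := Num.sqrt (complex.Re z ^+ 2 + complex.Im z ^+ 2).
Lemma normE z : `|z| = (nr z)%:C.
Proof. exact: normc_def. Qed.
Lemma nr_ge0 z : 0 <= nr z. Proof. exact: sqrtr_ge0. Qed.
Lemma lecRR (x y : R) : (x%:C <= y%:C :> R[i]) = (x <= y). Proof. exact: lecR. Qed.
Lemma conjE z : z^* = conjc z. Proof. reflexivity. Qed.
Lemma mulv (A : 'M[R[i]]_2) (x : 'cV[R[i]]_2) i : (A *m x) i 0 = A i 0 * x 0 0 + A i 1 * x 1 0.
Proof. rewrite !mxE !big_ord_recl big_ord0 addr0. by congr (_ + _); congr (_ * _); congr (_ _ _); apply/val_inj. Qed.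
Lemma trE (A : 'M[R[i]]_2) : \tr A = A 0 0 + A 1 1.
Proof. rewrite /mxtrace !big_ord_recl big_ord0 addr0. by congr (_ + _); congr (A _ _); apply/val_inj. Qed.
Lemma detE (A : 'M[R[i]]_2) : \det A = A 0 0 * A 1 1 - A 0 1 * A 1 0.
Proof. rewrite (expand_det_row _ 0) !big_ord_recl big_ord0 addr0 /cofactor !det_mx11 !mxE /= /bump /= expr0 expr1 mul1r mulN1r mulrN.
by congr (A _ _ * A _ _ - A _ _ * A _ _); apply/val_inj. Qed.


Lemma CD (x y : R) : (x + y)%:C = x%:C + y%:C :> R[i]. Proof. exact: rmorphD. Qed.
Lemma CB (x y : R) : (x - y)%:C = x%:C - y%:C :> R[i]. Proof. exact: rmorphB. Qed.
Lemma CM (x y : R) : (x * y)%:C = x%:C * y%:C :> R[i]. Proof. exact: rmorphM. Qed.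
Lemma CX (x : R) n : (x ^+ n)%:C = x%:C ^+ n :> R[i]. Proof. exact: rmorphXn. Qed.
Lemma CV (x : R) : (x^-1)%:C = x%:C^-1 :> R[i]. Proof. exact: fmorphV. Qed.
Lemma Cn n : (n%:R : R)%:C = n%:R :> R[i]. Proof. exact: rmorph_nat. Qed.
Lemma CN (x : R) : (- x)%:C = - x%:C :> R[i]. Proof. exact: rmorphN. Qed.
Lemma C1 : (1 : R)%:C = 1 :> R[i]. Proof. exact: rmorph1. Qed.
Lemma C0 : (0 : R)%:C = 0 :> R[i]. Proof. exact: rmorph0. Qed.
Lemma nrC k : 0 <= k -> nr k%:C = k.
Proof. move=> k0; apply: complexI; rewrite -normE; apply/ger0_norm; by rewrite lecR. Qed.
Lemma nrD z w : nr (z + w) <= nr z + nr w.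
Proof. by rewrite -lecR CD -!normE ler_normD. Qed.
Lemma nrM z w : nr (z * w) = nr z * nr w.
Proof. by apply: complexI; rewrite CM -!normE normrM. Qed.
Lemma nrN z : nr (- z) = nr z.
Proof. by apply: complexI; rewrite -!normE normrN. Qed.
Lemma nrB z w : nr (z - w) = nr (w - z).
Proof. by rewrite -nrN opprB. Qed.
Lemma nrJ z : nr (z^*) = nr z.
Proof. by apply: complexI; rewrite -!normE norm_conjC. Qed.
Lemma nr_half z : nr (z / 2) = nr z / 2.
Proof. apply: complexI; rewrite -!normE normrM normfV normr_nat CM CV Cn. by rewrite normE. Qed.
Lemma normCK' z : z * z^* = ((nr z) ^+ 2)%:C.
Proof. by rewrite -normCK normE CX. Qed.
Lemma nr1 : nr 1 = 1. Proof. by rewrite -C1 nrC. Qed.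
Lemma nr0 : nr 0 = 0. Proof. by rewrite -C0 nrC. Qed.
Lemma ge0_real (c : R[i]) : 0 <= c -> c = (complex.Re c)%:C.
Proof. move=> c0. by rewrite [LHS]complexE (ger0_Im c0) mulr0 addr0. Qed.

Lemma vnE (v : 'cV[R[i]]_2) : vnorm2 v = ((nr (v 0 0))^+2 + (nr (v 1 0))^+2)%:C.
Proof. by rewrite /vnorm2 !normE CD !CX. Qed.


Lemma real_step {u v w t cr y : R} : 0<=u -> 0<=v -> 0<=w -> 0<=t -> 0<=cr -> cr<1 ->
  u^+2+w^+2 <= cr^+2 -> y^+2 + (w^+2+v^+2)^+2 <= cr^+2*(w^+2+v^+2) -> t <= u+v ->
  w^+2 + (t/2)^+2 <= 1.
Proof.
move=> u0 v0 w0 t0 c0 c1 H1 H2 ht.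
have c2 : cr^+2 <= 1 by nra.
have n0 : 0 <= w^+2+v^+2 by nra.
have hn : w^+2+v^+2 <= 1.
  have : (w^+2+v^+2)^+2 <= (w^+2+v^+2) by nra.
  nra.
have h2 : (t/2)^+2 <= (u^+2+v^+2)/2.
  set T := t/2.
  have T0 : 0 <= T by rewrite /T; lra.
  have TT : T <= (u+v)/2 by rewrite /T; lra.
  have h3 : T^+2 <= ((u+v)/2)^+2 by nra.
  have := sqr_ge0 (u - v).
  set U := (u+v)/2 in h3 *.
  have eU : U * 2 = u + v by rewrite /U; lra.
  nra.
nra.
Qed.

Lemma pent_bound a s p : pentablock a s p -> nr a ^+ 2 + nr (s / 2) ^+ 2 <= 1.
Proof.
move=> [A [[c [c0 [c1 H]]] [<- [<- _]]]].
have ec := ge0_real _ c0; set cr := complex.Re c in ec.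
rewrite ec -C1 ltcR in c1; rewrite ec in H; rewrite ec lecR in c0.
have H1 := H (\col_i (if i == 0 then 1 else 0)).
have H2 := H (\col_i (if i == 0 then (A 1 0)^* else (A 1 1)^*)).
move: H1 H2; rewrite !vnE !mulv !mxE /= !mulr1 !mulr0 !addr0 nr1 nr0 !nrJ.
rewrite 2!normCK' -CD nrC; last by rewrite addr_ge0 // exprn_ge0 // nr_ge0.
rewrite expr0n /= addr0 expr1n -!CX -!CM !lecR mulr1.
rewrite trE nr_half.
set u := nr (A 0 0); set v := nr (A 1 1); set w := nr (A 1 0); set y := nr _.
move=> H1 H2.
have t1 : nr (A 0 0 + A 1 1) <= u + v by exact: nrD.
have t0 := nr_ge0 (A 0 0 + A 1 1).
have u0 := nr_ge0 (A 0 0); have v0 := nr_ge0 (A 1 1); have w0 := nr_ge0 (A 1 0); have y0 : 0 <= y by exact: nr_ge0.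
exact: (real_step (y:=y) u0 v0 w0 t0 c0 c1 H1 H2 t1).
Qed.

Lemma real_lim {al sg al' sg' d1 d2 e X : R} : 0 <= al -> 0 <= sg -> 0 <= al' -> 0 <= sg' ->
  al'^+2 + sg'^+2 <= 1 -> al <= al' + d1 -> sg <= sg' + d2 -> 0 <= d1 -> d1 < e -> 0 <= d2 -> d2 < e ->
  0 < e -> X = al^+2 + sg^+2 -> 1 < X -> e * (X + 7) = X - 1 -> False.
Proof.
move=> a0 s0 a0' s0' h1 ha hs d10 d1e d20 d2e e0 eX X1 eE.
have e1 : e < 1 by nra.
have ha1 : al' <= 1 by nra.
have hs1 : sg' <= 1 by nra.
have ha2 : al^+2 <= al'^+2 + 3 * e by nra.
have hs2 : sg^+2 <= sg'^+2 + 3 * e by nra.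
nra.
Qed.

Lemma closure_bound a s p : pentablock_closure a s p -> nr a ^+ 2 + nr (s / 2) ^+ 2 <= 1.
Proof.
move=> H; rewrite leNgt; apply/negP => X1.
set X := nr a ^+ 2 + nr (s / 2) ^+ 2 in X1.
set e := (X - 1) / (X + 7).
have X7 : X + 7 != 0 by rewrite gt_eqF //; lra.
have eE : e * (X + 7) = X - 1 by rewrite /e mulrVK // unitfE.
have e0 : 0 < e by rewrite /e divr_gt0 //; lra.
have e0' : 0 < e%:C :> R[i] by rewrite -C0 ltcR.
have [a' [s' [p' [hp [ha [hs _]]]]]] := H _ e0'.
rewrite normE ltcR in ha; rewrite normE ltcR in hs.
have hb := pent_bound _ _ _ hp.
have ha' : nr a <= nr a' + nr (a' - a).
  by rewrite (nrB a'); have := nrD a' (a - a'); rewrite addrC subrK.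
have hs' : nr (s / 2) <= nr (s' / 2) + nr (s' - s) / 2.
  rewrite (nrB s') -nr_half; have := nrD (s' / 2) ((s - s') / 2).
  by rewrite -mulrDl addrC subrK.
apply: (real_lim _ _ _ _ hb ha' hs' _ ha _ _ e0 erefl X1 eE).
- exact: nr_ge0.
- exact: nr_ge0.
- exact: nr_ge0.
- exact: nr_ge0.
- exact: nr_ge0.
- have := nr_ge0 (s' - s); lra.
- lra.
Qed.

Lemma conjCR (x : R) : (x%:C)^* = x%:C :> R[i]. Proof. exact: conjc_real. Qed.

Lemma conj1i (x : R) : (1 + 'i * x%:C)^* = 1 - 'i * x%:C :> R[i].
Proof. by rewrite rmorphD rmorph1 rmorphM /= conjCi conjCR mulNr. Qed.

Lemma unit_param a s : nr a ^+ 2 + nr (s / 2) ^+ 2 <= 1 ->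
  exists al om : R[i], al * al^* + a * a^* = 1 /\ om * om^* = 1 /\ al + al^* * om = s.
Proof.
move=> hb.
set t := s / 2 in hb.
have es : s = t * 2 by rewrite /t divfK // pnatr_eq0.
clearbody t.
have aa := normCK' a.
have a0 := nr_ge0 a; have t0 := nr_ge0 t.
case: (eqVneq t 0) => [tz | tnz].
- have r0 : 0 <= 1 - nr a ^+ 2 by nra.
  exists (Num.sqrt (1 - nr a ^+ 2))%:C, (-1); split; [|split].
  + rewrite normCK' nrC ?sqrtr_ge0 // sqr_sqrtr // aa -CD -C1; congr (_%:C); lra.
  + by rewrite rmorphN1 mulrNN mulr1.
  + by rewrite conjCR mulrN1 subrr es tz mul0r.
- have snz : nr t != 0.
    apply: contra tnz => /eqP h; by rewrite -normr_eq0 normE h C0.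
  have sp : 0 < nr t by rewrite lt_def snz t0.
  set k := Num.sqrt (1 - nr a ^+ 2 - nr t ^+ 2).
  have k2 : k ^+ 2 = 1 - nr a ^+ 2 - nr t ^+ 2 by rewrite sqr_sqrtr //; lra.
  have tt := normCK' t.
  have tJ : t^* != 0 by rewrite conjC_eq0.
  have ii : 'i * 'i = -1 :> R[i] by rewrite -expr2 sqrCi.
  set qr := k / nr t.
  have hq : qr * qr = k ^+ 2 / nr t ^+ 2 by rewrite /qr -expr2 expr_div_n.
  clearbody qr.
  exists (t * (1 + 'i * qr%:C)), (t / t^*); split; [|split].
  + rewrite rmorphM /= conj1i.
    transitivity ((t * t^*) * (1 - ('i * 'i) * (qr%:C * qr%:C)) + a * a^*); first by ring.
    rewrite tt aa ii.
    transitivity ((nr t ^+ 2 * (1 + qr * qr) + nr a ^+ 2)%:C).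
      by rewrite !(CD, CM, CX, C1); ring.
    rewrite -C1; congr (_%:C).
    rewrite hq.
    rewrite k2.
    field; exact: snz.
  + rewrite rmorphM fmorphV /= conjCK. field. by apply/andP.
  + rewrite rmorphM /= conj1i es.
    field; exact: tJ.
Qed.

Lemma fwd a s : nr a ^+ 2 + nr (s / 2) ^+ 2 <= 1 ->
  exists p : R[i], unit_circle p /\ pentablock_closure a s p.
Proof.
move=> hb; have [al [om [h1 [h2 h3]]]] := unit_param _ _ hb.
pose A0 : 'M[R[i]]_2 := \matrix_(i, j) (if i == 0 then (if j == 0 then al else - a^* * om)
   else (if j == 0 then a else al^* * om)).
have hdet : \det A0 = om.
  rewrite detE !mxE /=.
  by transitivity (om * (al * al^* + a * a^*)); [ring | rewrite h1 mulr1].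
have htr : \tr A0 = s by rewrite trE !mxE /=.
have hiso x : vnorm2 (A0 *m x) = vnorm2 x.
  rewrite /vnorm2 !normCK !mulv !mxE /=.
  rewrite !(rmorphD, rmorphM, rmorphN) /= !conjCK.
  transitivity ((al * al^* + a * a^*) * (x 0 0 * (x 0 0)^*) +
     (al * al^* + a * a^*) * (om * om^*) * (x 1 0 * (x 1 0)^*)); first by ring.
  by rewrite h1 h2 !mul1r.
have nom : nr om = 1.
  have := normCK' om; rewrite h2 -C1 => /complexI h.
  have := nr_ge0 om; nra.
have na1 : nr a <= 1 by have := nr_ge0 (s / 2); have := nr_ge0 a; nra.
have ns1 : nr s <= 2 by have := nr_half s; have := nr_ge0 (s / 2); have := nr_ge0 a; nra.
exists om; split; first by rewrite /unit_circle normE nom C1.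
move=> eps eps0.
have ee := ge0_real _ (ltW eps0); set e := complex.Re eps in ee.
rewrite ee -C0 ltcR in eps0.
set d := e / (e + 4).
have e4 : e + 4 != 0 by rewrite gt_eqF //; lra.
have dE : d * (e + 4) = e by rewrite /d mulrVK // unitfE.
have d0 : 0 < d by rewrite /d divr_gt0 //; lra.
have d2 : 2 * d < e by nra.
have d1 : d < 1 by nra.
clearbody d.
set r := 1 - d.
exists (r%:C * a), (r%:C * s), (r%:C ^+ 2 * om); split; [|split; [|split]].
- exists (r%:C *: A0); split; [|split; [|split]].
  + exists r%:C; split; [|split].
    * by rewrite -C0 lecR /r; lra.
    * by rewrite -C1 ltcR /r; lra.
    * move=> x; rewrite -scalemxAl.
      have -> : forall v : 'cV[R[i]]_2, vnorm2 (r%:C *: v) = `|r%:C| ^+ 2 * vnorm2 v.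
        by move=> v; rewrite /vnorm2 !mxE !normrM !exprMn mulrDr.
      rewrite hiso ger0_norm //; by rewrite -C0 lecR /r; lra.
  + by rewrite !mxE.
  + by rewrite mxtraceZ htr.
  + by rewrite detZ hdet.
- have -> : r%:C * a - a = - (d%:C * a) by rewrite /r CB C1; ring.
  rewrite ee normE nrN nrM nrC ?ltcR; [nra | lra].
- have -> : r%:C * s - s = - (d%:C * s) by rewrite /r CB C1; ring.
  rewrite ee normE nrN nrM nrC ?ltcR; [nra | lra].
- have -> : r%:C ^+ 2 * om - om = - (((2 - d) * d)%:C * om).
    by rewrite /r CB C1 CM CB Cn; ring.
  rewrite ee normE nrN nrM nrC ?ltcR; [rewrite nom; nra | nra].
Qed.

Lemma mainR a s : closed_ball2 a (s / 2) <->
  exists p : R[i], unit_circle p /\ pentablock_closure a s p.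
Proof.
rewrite /closed_ball2 !normE -!CX -CD -C1 lecR; split.
- exact: fwd.
- by case=> p [_ hp]; exact: closure_bound hp.
Qed.
End S.

Theorem mainTheorem10 (R : realType) (a s : R[i]) :
  closed_ball2 a (s / 2) <->
  exists p : R[i], unit_circle p /\ pentablock_closure a s p.
Proof. exact: mainR. Qed.
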